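(* For $\kappa\in\mathbb{R}$ and $b>0$ define $$\ell(\kappa;b)=\sum_{n\in\mathbb{Z}}\ \sup_{y\in[0,1]}\ \frac{b}{(y+n+\kappa)^2+b^2}.$$ Then for each $b>0$ the function $\kappa\mapsto\ell(\kappa;b)$ is $\mathbb{Z}$-periodic and $$\sup_{\kappa\in\mathbb{R}}\ell(\kappa;b)\le\pi\Big(1+\frac1b\Big).$$ *)

(* Defs.v *)
From HB Require Import structures.
From mathcomp Require Import all_boot all_order all_algebra.
From mathcomp Require Import all_classical all_reals all_analysis.
Set Implicit Arguments. Unset Strict Implicit. Unset Printing Implicit Defensive.
Import Order.TTheory GRing.Theory Num.Theory.
Local Open Scope classical_set_scope.
Local Open Scope ring_scope.

Definition ell_term (R : realType) (kappa b : R) (n : int) : \bar R :=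
  ereal_sup [set ((b / ((y + n%:~R + kappa) ^+ 2 + b ^+ 2))%:E : \bar R)
            | y in `[0, 1]%classic].

Definition ell (R : realType) (kappa b : R) : \bar R :=
  \esum_(n in [set: int]) ell_term kappa b n.

(* Main.v *)
Require Import Defs.
From HB Require Import structures.
From mathcomp Require Import all_boot all_order all_algebra.
From mathcomp Require Import all_classical all_reals all_analysis.
From mathcomp Require Import ring lra.
Import Order.TTheory GRing.Theory Num.Theory.
Local Open Scope classical_set_scope.
Local Open Scope ring_scope.

Definition fb {R : realType} (b x : R) := b / (x ^+ 2 + b ^+ 2).
Definition Ab {R : realType} (b x : R) := atan (x / b).

Lemma fb_anti {R : realType} (b x z : R) : 0 < b -> x ^+ 2 <= z ^+ 2 -> fb b z <= fb b x.
Proof.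
move=> hb hxz; rewrite /fb ler_pM2l // lef_pV2 ?posrE; last 2 first.
- by rewrite ltr_wpDl ?sqr_ge0 ?exprn_gt0.
- by rewrite ltr_wpDl ?sqr_ge0 ?exprn_gt0.
by rewrite lerD2r.
Qed.

Lemma fb_ge0 {R : realType} (b x : R) : 0 < b -> 0 <= fb b x.
Proof.
move=> hb; rewrite /fb divr_ge0 ?ltW//; nra.
Qed.

Lemma fb_le {R : realType} (b x : R) : 0 < b -> fb b x <= b^-1.
Proof.
move=> hb; have h := fb_anti b 0 x hb (_ : 0 ^+ 2 <= x ^+ 2).
have e : fb b 0 = b^-1 by rewrite /fb; field; rewrite gt_eqF.
by rewrite -e h // expr0n /= sqr_ge0.
Qed.

Lemma L1 {R : realType} (b u v : R) : 0 < b -> 0 <= u -> u <= v ->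
  (v - u) * fb b v <= Ab b v - Ab b u.
Proof.
move=> hb u0 uv.
have hub : u / b <= v / b by rewrite ler_pM2r ?invr_gt0.
have H := MVT_segment (f := atan) (df := fun x => (1 + x ^+ 2)^-1) hub
  (fun x _ => is_derive1_atan x).
have [|c cI E] := H.
  by apply: derivable_within_continuous => z _; exact: ex_derive.
rewrite /Ab E.
move: cI; rewrite in_itv /= => /andP[c1 c2].
have c0 : 0 <= c by apply: (le_trans _ c1); rewrite divr_ge0 // ltW.
have hc : (1 + c ^+ 2)^-1 >= (1 + (v / b) ^+ 2)^-1.
  rewrite lef_pV2 ?posrE; [|nra|nra].
  have : 0 <= v / b - c by rewrite subr_ge0.
  nra.
have -> : (v - u) * fb b v = (1 + (v / b) ^+ 2)^-1 * (v / b - u / b).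
  rewrite /fb; field.
  by rewrite gt_eqF //; nra.
by apply: ler_wpM2r => //; rewrite subr_ge0.
Qed.

Lemma G1 {R : realType} (b k : R) (N : nat) : 0 < b -> 0 <= k <= 1 ->
  \sum_(0 <= i < N.+1) fb b (i%:R + k) <= (1 - k) / b + Ab b (N%:R + k).
Proof.
move=> hb /andP[k0 k1]; elim: N => [|N IH].
  rewrite big_nat1 add0r.
  have h1 := L1 b 0 k hb (lexx 0) k0.
  have h2 := fb_le b k hb.
  have h3 := fb_ge0 b k hb.
  have e : Ab b 0 = 0 by rewrite /Ab mul0r atan0.
  rewrite e subr0 subr0 in h1.
  have : (1 - k) * fb b k <= (1 - k) * b^-1 by apply: ler_wpM2l => //; rewrite subr_ge0.
  rewrite mulrC [_ * b^-1]mulrC; nra.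
rewrite big_nat_recr //=.
have h := L1 b (N%:R + k) (N.+1%:R + k) hb.
have hN : 0 <= N%:R + k :> R by apply: addr_ge0.
have hle : N%:R + k <= N.+1%:R + k :> R by rewrite lerD2r ler_nat.
have := h hN hle.
have -> : N.+1%:R + k - (N%:R + k) = 1 :> R by rewrite -natr1; ring.
rewrite mul1r => hh.
lra.
Qed.

Lemma G2 {R : realType} (b k : R) (N : nat) : 0 < b -> 0 <= k <= 1 ->
  \sum_(0 <= i < N) fb b (i%:R + k) <= (1 - k) / b + pi / 2.
Proof.
move=> hb hk; case: N => [|N].
  rewrite big_geq //.
  have := pi_gt0 R; have : 0 <= (1 - k) / b.
    by apply: divr_ge0; [case/andP: hk => _ ?; lra | exact: ltW].
  lra.
apply: le_trans (G1 b k N hb hk) _.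
rewrite lerD2l; exact/ltW/atan_ltpi2.
Qed.

Lemma T_ub {R : realType} (kappa b : R) (n : int) (c : R) :
  (forall y : R, 0 <= y <= 1 -> fb b (y + n%:~R + kappa) <= c) ->
  (ell_term kappa b n <= c%:E)%E.
Proof.
move=> h; apply: ge_ereal_sup => _ [y yI <-].
rewrite lee_fin; apply: h.
by move: yI; rewrite /= in_itv /=.
Qed.

Lemma T_ge0 {R : realType} (kappa b : R) (n : int) : 0 < b -> (0 <= ell_term kappa b n)%E.
Proof.
move=> hb; apply: le_trans (ereal_sup_ubound _); last first.
  exists 0; first by rewrite /= in_itv /= lexx ler01.
  reflexivity.
by rewrite lee_fin; exact: fb_ge0.
Qed.

Lemma T_pos {R : realType} (kappa b : R) (n : int) : 0 < b -> 0 <= n%:~R + kappa ->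
  (ell_term kappa b n <= (fb b (n%:~R + kappa))%:E)%E.
Proof.
move=> hb h; apply: T_ub => y /andP[y0 y1]; apply: fb_anti => //; nra.
Qed.

Lemma T_neg {R : realType} (kappa b : R) (n : int) : 0 < b -> n%:~R + kappa + 1 <= 0 ->
  (ell_term kappa b n <= (fb b (- (n%:~R + kappa + 1)))%:E)%E.
Proof.
move=> hb h; apply: T_ub => y /andP[y0 y1]; apply: fb_anti => //; nra.
Qed.

Lemma T_all {R : realType} (kappa b : R) (n : int) : 0 < b ->
  (ell_term kappa b n <= (b^-1)%:E)%E.
Proof. by move=> hb; apply: T_ub => y _; exact: fb_le. Qed.

Lemma term_shift {R : realType} (kappa b : R) (n : int) :
  ell_term (kappa + 1) b n = ell_term kappa b (n + 1).
Proof.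
rewrite /ell_term; congr ereal_sup; congr image; apply/funext => y.
by rewrite intrD /=; congr (_%:E); congr (_ / _); congr (_ ^+ 2 + _); ring.
Qed.

Lemma per1 {R : realType} (kappa b : R) : ell (kappa + 1) b = ell kappa b.
Proof.
rewrite /ell (eq_esum (b := fun n => ell_term kappa b (n + 1))); last first.
  by move=> n _; exact: term_shift.
rewrite (reindex_esum [set: int] [set: int] (fun n => n + 1)) //.
split.
- by move=> x.
- by move=> x y _ _ /addIr.
- move=> y _; exists (y - 1) => //; by rewrite subrK.
Qed.

Lemma perZ {R : realType} (kappa b : R) (k : int) : ell (kappa + k%:~R) b = ell kappa b.
Proof.
have hn : forall (m : nat) x, ell (x + m%:R) b = ell x b.
  elim=> [|m IH] x; first by rewrite addr0.
  by rewrite -natr1 addrA per1 IH.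
case: k => [m|m]; first exact: hn.
rewrite NegzE intrN -[in RHS](subrK (m.+1%:R) kappa) hn.
done.
Qed.

Lemma series_ub {R : realType} (u : nat -> \bar R) (c : \bar R) :
  (forall n, (0 <= u n)%E) -> (forall N, (\sum_(0 <= i < N) u i <= c)%E) ->
  (\sum_(i <oo) u i <= c)%E.
Proof.
move=> u0 h; apply: lime_le; last exact: nearW.
by apply: is_cvg_nneseries => n _ _; exact: u0.
Qed.

Lemma bound01 {R : realType} (kappa b : R) : 0 < b -> 0 <= kappa < 1 ->
  (ell kappa b <= (pi + 2 / b)%:E)%E.
Proof.
move=> hb /andP[k0 k1].
rewrite /ell (esumID [set n : int | 0 <= n] [set: int]); last first.
  by move=> n _; exact: T_ge0.
rewrite (reindex_esum [set: nat] _ (fun n : nat => Posz n)); last first.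
  split.
  - by move=> x _; split.
  - by move=> x y _ _ [].
  - by move=> [y|y] [_ /= hy] //; exists y.
rewrite (reindex_esum [set: nat] _ (fun n : nat => Negz n)); last first.
  split.
  - by move=> x _; split.
  - by move=> x y _ _ [].
  - by move=> [y|y] [_ /= hy] //; exists y.
rewrite -!nneseries_esumT; last 2 first.
- by move=> n; exact: T_ge0.
- by move=> n; exact: T_ge0.
have hpos : (\sum_(i <oo) ell_term kappa b (Posz i) <= ((1 - kappa) / b + pi / 2)%:E)%E.
  apply: series_ub; first by move=> n; exact: T_ge0.
  move=> N; apply: le_trans (_ : (\sum_(0 <= i < N) (fb b (i%:R + kappa))%:E <= _)%E).
    apply: lee_sum => i _; apply: T_pos => //; apply: addr_ge0 => //.
  rewrite sumEFin lee_fin; apply: G2 => //; rewrite k0 ltW //.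
have hneg : (\sum_(i <oo) ell_term kappa b (Negz i) <= (b^-1 + (kappa / b + pi / 2))%:E)%E.
  apply: series_ub; first by move=> n; exact: T_ge0.
  case=> [|N].
    rewrite big_geq // lee_fin.
    have := pi_gt0 R; have : 0 < b^-1 by rewrite invr_gt0.
    have : 0 <= kappa / b by rewrite divr_ge0 // ltW.
    lra.
  rewrite big_nat_recl // EFinD; apply: leeD; first exact: T_all.
  apply: le_trans (_ : (\sum_(0 <= i < N) (fb b (i%:R + (1 - kappa)))%:E <= _)%E).
    apply: lee_sum => i _.
    have e : - ((Negz i.+1)%:~R + kappa + 1) = i%:R + (1 - kappa) :> R.
      rewrite NegzE intrN -!pmulrn -!natr1; ring.
    rewrite -e; apply: T_neg => //.
    rewrite NegzE intrN -!pmulrn -!natr1.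
    have := ler0n R i; lra.
  rewrite sumEFin lee_fin.
  apply: le_trans (G2 b (1 - kappa) N hb _) _.
    by apply/andP; split; lra.
  by rewrite (_ : 1 - (1 - kappa) = kappa) //; ring.
apply: le_trans (leeD hpos hneg) _.
rewrite -EFinD lee_fin.
rewrite (_ : _ + _ = pi + 2 / b) //; field; exact: lt0r_neq0.
Qed.

Theorem lemma3p2 (R : realType) (b : R) (hb : 0 < b) :
  (forall kappa : R, ell (kappa + 1) b = ell kappa b) /\
  (ereal_sup [set ell kappa b | kappa in [set: R]]
     <= (pi * (1 + b^-1))%:E)%E.
Proof.
split; first by move=> k; exact: per1.
apply: ge_ereal_sup => _ [k _ <-].
rewrite (_ : ell k b = ell (k - (Num.floor k)%:~R) b); last first.
  by rewrite -(perZ (k - (Num.floor k)%:~R) b (Num.floor k)) subrK.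
apply: le_trans (bound01 (k - (Num.floor k)%:~R) b hb _) _.
  have h1 := Num.Theory.floor_le k.
  have h2 := Num.Theory.floorD1_gt k.
  rewrite intrD in h2.
  by apply/andP; split; lra.
rewrite lee_fin.
have := pi_ge2 R; have : 0 < b^-1 by rewrite invr_gt0.
move=> hbi hp.
have : 0 <= (pi - 2) * b^-1 by apply: mulr_ge0; lra.
rewrite mulrDr mulr1 mulrBl; lra.
Qed.
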